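(* Let $R$ be a commutative ring and let $(A,d)$ be a differential graded $R$-algebra. If the graded algebra $\ker(d)$ is graded-Artinian, then $(A,d)$ is dg-Noetherian and dg-Artinian.
   Context: A differential graded (dg) $R$-algebra $(A,d)$ is a $\mathbb{Z}$-graded $R$-algebra $A$ with an $R$-linear endomorphism $d$, homogeneous of degree $1$, with $d^2=0$ and $d(ab)=d(a)b+(-1)^{|a|}a\,d(b)$ for homogeneous $a,b$. Then $\ker(d)$ is a graded subalgebra of $A$. A graded algebra is graded-Artinian if it satisfies the descending chain condition on graded ideals. A dg-ideal of $(A,d)$ is a graded ideal $I$ with $d(I)\subseteq I$; $(A,d)$ is dg-Noetherian (resp. dg-Artinian) if it satisfies the ascending (resp. descending) chain condition on dg-ideals (i.e. on dg-submodules of $A$ viewed as a dg-module over itself). *)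

(* Defs.v *)
From HB Require Import structures.
From mathcomp Require Import all_boot all_order all_algebra.
Set Implicit Arguments. Unset Strict Implicit. Unset Printing Implicit Defensive.
Import Order.TTheory GRing.Theory Num.Theory.
Local Open Scope ring_scope.

(* A Z-grading of an R-algebra A: homogeneous components  comp n  (n : int),
   given as predicates "x is homogeneous of degree n". *)
Section Graded.
Variables (R : comPzRingType) (A : algType R).

Definition grading_submod (comp : int -> A -> Prop) :=
  forall n, comp n 0 /\ (forall x y, comp n x -> comp n y -> comp n (x + y))
            /\ (forall (r : R) x, comp n x -> comp n (r *: x)).

Definition grading_direct (comp : int -> A -> Prop) :=
  (forall a : A, exists (s : seq int) (f : int -> A),
      uniq s /\ (forall n, comp n (f n)) /\ a = \sum_(n <- s) f n) /\
  (forall (s : seq int) (f : int -> A),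
      uniq s -> (forall n, comp n (f n)) -> \sum_(n <- s) f n = 0 ->
      forall n, n \in s -> f n = 0).

Definition grading_mul (comp : int -> A -> Prop) :=
  comp 0 1 /\ forall m n x y, comp m x -> comp n y -> comp (m + n) (x * y).

Definition is_graded_algebra (comp : int -> A -> Prop) :=
  [/\ grading_submod comp, grading_direct comp & grading_mul comp].

Definition is_differential (comp : int -> A -> Prop) (d : A -> A) :=
  [/\ linear d,
      (forall n x, comp n x -> comp (n + 1) (d x)),
      (forall x, d (d x) = 0) &
      (forall n a b, comp n a ->
         d (a * b) = d a * b + (-1) ^+ `|n|%N * (a * d b))].

Definition is_dg_algebra (comp : int -> A -> Prop) (d : A -> A) :=
  is_graded_algebra comp /\ is_differential comp d.

Definition graded_subset (comp : int -> A -> Prop) (I : A -> Prop) :=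
  forall (s : seq int) (f : int -> A),
    uniq s -> (forall n, comp n (f n)) -> I (\sum_(n <- s) f n) ->
    forall n, n \in s -> I (f n).

Definition left_ideal_in (S : A -> Prop) (I : A -> Prop) :=
  [/\ forall x, I x -> S x,
      I 0,
      (forall x y, I x -> I y -> I (x + y)) &
      (forall a x, S a -> I x -> I (a * x))].

Definition kerd (d : A -> A) : A -> Prop := fun x => d x = 0.

Definition graded_ideal_of_kerd (comp : int -> A -> Prop) (d : A -> A)
  (I : A -> Prop) :=
  left_ideal_in (kerd d) I /\ graded_subset comp I.

(* dg-ideals of (A,d): graded left ideals (= graded submodules of A over
   itself) stable under d *)
Definition dg_ideal (comp : int -> A -> Prop) (d : A -> A) (I : A -> Prop) :=
  [/\ left_ideal_in (fun _ => True) I, graded_subset comp I &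
      forall x, I x -> I (d x)].

Definition same_set (I J : A -> Prop) := forall x, I x <-> J x.
Definition subset (I J : A -> Prop) := forall x, I x -> J x.

Definition ACC (P : (A -> Prop) -> Prop) :=
  forall I : nat -> (A -> Prop), (forall k, P (I k)) ->
    (forall k, subset (I k) (I k.+1)) ->
    exists N, forall k, (N <= k)%N -> same_set (I k) (I N).

Definition DCC (P : (A -> Prop) -> Prop) :=
  forall I : nat -> (A -> Prop), (forall k, P (I k)) ->
    (forall k, subset (I k.+1) (I k)) ->
    exists N, forall k, (N <= k)%N -> same_set (I k) (I N).

Definition kerd_graded_artinian (comp : int -> A -> Prop) (d : A -> A) :=
  DCC (graded_ideal_of_kerd comp d).

Definition dg_noetherian (comp : int -> A -> Prop) (d : A -> A) :=
  ACC (dg_ideal comp d).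

Definition dg_artinian (comp : int -> A -> Prop) (d : A -> A) :=
  DCC (dg_ideal comp d).

End Graded.

(* Main.v *)
Require Import Defs.
From HB Require Import structures.
From mathcomp Require Import all_boot all_order all_algebra.
From mathcomp Require Import zify.
From mathcomp Require Import boolp classical_sets.
From Stdlib Require Import ClassicalEpsilon Classical.
Set Implicit Arguments. Unset Strict Implicit. Unset Printing Implicit Defensive.
Import Order.TTheory GRing.Theory Num.Theory.
Local Open Scope ring_scope.
Section Grading.
Variables (R : comPzRingType) (A : algType R) (comp : int -> A -> Prop).
Hypothesis Hsub : grading_submod comp.
Hypothesis Hdir : grading_direct comp.
Hypothesis Hmul : grading_mul comp.

Lemma comp0 n : comp n 0. Proof. by case: (Hsub n). Qed.
Lemma compD n x y : comp n x -> comp n y -> comp n (x + y).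
Proof. by case: (Hsub n) => _ [H _]; apply: H. Qed.
Lemma compN n x : comp n x -> comp n (- x).
Proof. by case: (Hsub n) => _ [_ H] cx; rewrite -scaleN1r; apply: H. Qed.
Lemma compB n x y : comp n x -> comp n y -> comp n (x - y).
Proof. by move=> cx cy; apply: compD => //; apply: compN. Qed.
Lemma compM m n x y : comp m x -> comp n y -> comp (m + n) (x * y).
Proof. by case: Hmul => _ H; apply: H. Qed.
Lemma comp1 : comp 0 1. Proof. by case: Hmul. Qed.

Definition dec (x : A) : {s : seq int & {f : int -> A | uniq s /\ (forall n, comp n (f n)) /\ x = \sum_(n <- s) f n}}.
Proof.
have [s Hs] := constructive_indefinite_description _ (Hdir.1 x).
have [f Hf] := constructive_indefinite_description _ Hs.
by exists s; exists f.
Defined.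

Definition supp x := projT1 (dec x).
Definition cf x := proj1_sig (projT2 (dec x)).
Definition proj n x := if n \in supp x then cf x n else 0.

Lemma supp_uniq x : uniq (supp x).
Proof. by rewrite /supp /cf; case: (dec x) => s [f [? ?]]. Qed.
Lemma cf_comp x n : comp n (cf x n).
Proof. by rewrite /supp /cf; case: (dec x) => s [f [? [? ?]]]. Qed.
Lemma cf_sum x : x = \sum_(n <- supp x) cf x n.
Proof. by rewrite /supp /cf; case: (dec x) => s [f [? [? ?]]]. Qed.

Lemma comp_proj n x : comp n (proj n x).
Proof. by rewrite /proj; case: ifP => _; [apply: cf_comp | apply: comp0]. Qed.

Lemma sum_sub (s u : seq int) (f : int -> A) : uniq s -> uniq u ->
  {subset s <= u} ->
  \sum_(k <- u) (if k \in s then f k else 0) = \sum_(k <- s) f k.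
Proof.
move=> us uu su; rewrite -big_mkcond /= -big_filter; apply: perm_big.
apply: uniq_perm; first exact: filter_uniq.
  done.
by move=> k; rewrite mem_filter; case ks: (k \in s) => //=; rewrite su.
Qed.

Lemma proj_sum (s : seq int) (f : int -> A) : uniq s -> (forall k, comp k (f k)) ->
  forall n, proj n (\sum_(k <- s) f k) = if n \in s then f n else 0.
Proof.
move=> us cf' n; set x := \sum_(k <- s) f k.
pose u := undup (supp x ++ s).
pose g k := (if k \in supp x then cf x k else 0) - (if k \in s then f k else 0).
have uu : uniq u by apply: undup_uniq.
have cg k : comp k (g k).
  by apply: compB; [case: ifP => _; [apply: cf_comp|apply: comp0] | case: ifP => _; [apply: cf'|apply: comp0]].
have sg : \sum_(k <- u) g k = 0.
  rewrite sumrB sum_sub ?supp_uniq // ?sum_sub //.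
  - by rewrite -cf_sum subrr.
  - by move=> k ks; rewrite mem_undup mem_cat ks orbT.
  - by move=> k ks; rewrite mem_undup mem_cat ks.
have g0 := Hdir.2 u g uu cg sg.
rewrite /proj; case nu: (n \in u).
  have := g0 n nu; rewrite /g => /eqP; rewrite subr_eq0 => /eqP.
  by case: ifP => //.
move: nu; rewrite mem_undup mem_cat => /negbT; rewrite negb_or => /andP [/negbTE -> /negbTE ->] //.
Qed.



Lemma proj_comp m n x : comp m x -> proj n x = if n == m then x else 0.
Proof.
move=> cx.
pose f k := if k == m then x else 0.
have cf' k : comp k (f k) by rewrite /f; case: eqP => [->|_] //; apply: comp0.
have := @proj_sum [:: m] f isT cf' n.
by rewrite big_seq1 /f eqxx inE => ->; case: eqP.
Qed.

Lemma proj_out n x : n \notin supp x -> proj n x = 0.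
Proof. by rewrite /proj => /negbTE ->. Qed.

Lemma proj_decomp x : x = \sum_(n <- supp x) proj n x.
Proof.
rewrite {1}(cf_sum x); apply: eq_big_seq => n ns; by rewrite /proj ns.
Qed.

Lemma sum_sub_proj (u : seq int) x : uniq u -> {subset supp x <= u} ->
  \sum_(k <- u) proj k x = x.
Proof.
move=> uu su; rewrite /proj sum_sub ?supp_uniq //.
by rewrite -cf_sum.
Qed.

Lemma proj_add n x y : proj n (x + y) = proj n x + proj n y.
Proof.
pose u := undup (supp x ++ supp y).
have uu : uniq u by apply: undup_uniq.
have e : x + y = \sum_(k <- u) (proj k x + proj k y).
  rewrite big_split /= !sum_sub_proj //.
  - by move=> k ks; rewrite mem_undup mem_cat ks orbT.
  - by move=> k ks; rewrite mem_undup mem_cat ks.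
rewrite e proj_sum //; last by move=> k; apply: compD; apply: comp_proj.
case: ifP => // /negbT; rewrite mem_undup mem_cat negb_or => /andP [h1 h2].
by rewrite !proj_out // addr0.
Qed.

Lemma proj0 n : proj n 0 = 0.
Proof. by have := proj_add n 0 0; rewrite addr0 => /eqP; rewrite -subr_eq subrr eq_sym => /eqP. Qed.

Lemma projN n x : proj n (- x) = - proj n x.
Proof. by apply/eqP; rewrite -subr_eq0 opprK -proj_add addNr proj0. Qed.

Lemma projB n x y : proj n (x - y) = proj n x - proj n y.
Proof. by rewrite proj_add projN. Qed.

Lemma proj_mull m n a x : comp m a -> proj n (a * x) = a * proj (n - m) x.
Proof.
move=> ca.
have e : a * x = \sum_(k <- map (fun k => k + m) (supp x)) (a * proj (k - m) x).
  rewrite big_map {1}(proj_decomp x) mulr_sumr; apply: eq_bigr => k _.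
  by rewrite addrK.
have ui : uniq (map (fun k => k + m) (supp x)).
  by rewrite map_inj_uniq ?supp_uniq // => i j /addIr.
rewrite e proj_sum //.
  case: ifP => // /negbT nin; rewrite proj_out ?mulr0 //.
  apply: contra nin => h; apply/mapP; exists (n - m) => //; by rewrite subrK.
move=> k; have := compM ca (comp_proj (k - m) x); by rewrite addrC subrK.
Qed.

Lemma proj_mulr m n a x : comp m a -> proj n (x * a) = proj (n - m) x * a.
Proof.
move=> ca.
have e : x * a = \sum_(k <- map (fun k => k + m) (supp x)) (proj (k - m) x * a).
  rewrite big_map {1}(proj_decomp x) mulr_suml; apply: eq_bigr => k _.
  by rewrite addrK.
have ui : uniq (map (fun k => k + m) (supp x)).
  by rewrite map_inj_uniq ?supp_uniq // => i j /addIr.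
rewrite e proj_sum //.
  case: ifP => // /negbT nin; rewrite proj_out ?mul0r //.
  apply: contra nin => h; apply/mapP; exists (n - m) => //; by rewrite subrK.
move=> k; have := compM (comp_proj (k - m) x) ca; by rewrite subrK.
Qed.

Lemma hom_ind (P I : A -> Prop) :
  (forall n x, I x -> I (proj n x)) -> P 0 -> (forall x y, P x -> P y -> P (x + y)) ->
  (forall n x, I x -> comp n x -> P x) -> forall x, I x -> P x.
Proof.
move=> Ip P0 PD Ph x Ix; rewrite (proj_decomp x).
apply: (big_ind P) => // n _; apply: (Ph n); [exact: Ip | exact: comp_proj].
Qed.

Lemma graded_proj (I : A -> Prop) : I 0 -> graded_subset comp I ->
  forall n x, I x -> I (proj n x).
Proof.
move=> I0 gI n x Ix; case ns: (n \in supp x); last by rewrite proj_out ?ns.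
apply: (gI (supp x) (fun k => proj k x)) => //.
- exact: supp_uniq.
- by move=> k; apply: comp_proj.
- by rewrite -proj_decomp.
Qed.

Lemma proj_graded (I : A -> Prop) : (forall n x, I x -> I (proj n x)) ->
  graded_subset comp I.
Proof.
move=> Ip s f us cf' Is n ns; have := Ip n _ Is; by rewrite proj_sum // ns.
Qed.


Variable S : A -> Prop.
Hypothesis S0 : S 0.
Hypothesis S1 : S 1.
Hypothesis SD : forall x y, S x -> S y -> S (x + y).
Hypothesis SN : forall x, S x -> S (- x).
Hypothesis SM : forall x y, S x -> S y -> S (x * y).
Hypothesis Sp : forall n x, S x -> S (proj n x).

Definition gi (I : A -> Prop) :=
  [/\ forall x, I x -> S x, I 0, (forall x y, I x -> I y -> I (x + y)),
      (forall a x, S a -> I x -> I (a * x)) & (forall n x, I x -> I (proj n x))].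

Definition sb (I J : A -> Prop) := forall x, I x -> J x.

Lemma giS I : gi I -> forall x, I x -> S x. Proof. by case. Qed.
Lemma gi0 I : gi I -> I 0. Proof. by case. Qed.
Lemma giD I : gi I -> forall x y, I x -> I y -> I (x + y). Proof. by case. Qed.
Lemma giM I : gi I -> forall a x, S a -> I x -> I (a * x). Proof. by case. Qed.
Lemma gip I : gi I -> forall n x, I x -> I (proj n x). Proof. by case. Qed.
Lemma giN I : gi I -> forall x, I x -> I (- x).
Proof. move=> g x Ix; rewrite -mulN1r; apply: giM => //; exact: SN. Qed.
Lemma giB I : gi I -> forall x y, I x -> I y -> I (x - y).
Proof. by move=> g x y Ix Iy; apply: giD => //; apply: giN. Qed.

Lemma giSS : gi S.
Proof.
split.
- by [].
- exact: S0.
- exact: SD.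
- exact: SM.
- exact: Sp.
Qed.

Definition sumI (I J : A -> Prop) x := exists a b, I a /\ J b /\ x = a + b.
Definition capI (I J : A -> Prop) x := I x /\ J x.

Lemma gi_sum I J : gi I -> gi J -> gi (sumI I J).
Proof.
move=> gI gJ; split.
- by move=> _ [a [b [Ia [Jb ->]]]]; apply: SD; [apply: (giS gI) | apply: (giS gJ)].
- by exists 0, 0; rewrite addr0; split; [exact: gi0 gI|split; [exact: gi0 gJ|]].
- move=> _ _ [a [b [Ia [Jb ->]]]] [a' [b' [Ia' [Jb' ->]]]].
  exists (a + a'), (b + b'); split; first exact: giD.
  by split; [apply: giD | rewrite addrACA].
- move=> s _ Ss [a [b [Ia [Jb ->]]]]; exists (s * a), (s * b).
  by rewrite mulrDr; split; [apply: giM|split; [apply: giM|]].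
- move=> n _ [a [b [Ia [Jb ->]]]]; exists (proj n a), (proj n b).
  by rewrite proj_add; split; [apply: gip|split; [apply: gip|]].
Qed.

Lemma gi_cap I J : gi I -> gi J -> gi (capI I J).
Proof.
move=> gI gJ; split.
- by move=> x [Ix _]; apply: (giS gI).
- by split; apply: gi0.
- by move=> x y [? ?] [? ?]; split; apply: giD.
- by move=> a x Sa [? ?]; split; apply: giM.
- by move=> n x [? ?]; split; apply: gip.
Qed.

Lemma sum_l (I J : A -> Prop) : gi J -> sb I (sumI I J).
Proof. by move=> gJ x Ix; exists x, 0; rewrite addr0; split => //; split => //; apply: gi0. Qed.
Lemma sum_r (I J : A -> Prop) : gi I -> sb J (sumI I J).
Proof. by move=> gI x Jx; exists 0, x; rewrite add0r; split => //; apply: gi0. Qed.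
Lemma sum_le I J K : gi K -> sb I K -> sb J K -> sb (sumI I J) K.
Proof. by move=> gK IK JK _ [a [b [Ia [Jb ->]]]]; apply: (giD gK); [apply: IK|apply: JK]. Qed.

Definition mulI (Q : A -> Prop) y x := exists q, Q q /\ x = q * y.
Lemma gi_mulI Q m y : gi Q -> comp m y -> S y -> gi (mulI Q y).
Proof.
move=> gQ cy Sy; split.
- by move=> _ [q [Qq ->]]; apply: SM => //; apply: (giS gQ).
- by exists 0; rewrite mul0r; split => //; exact: gi0 gQ.
- by move=> _ _ [q [Qq ->]] [q' [Qq' ->]]; exists (q + q'); rewrite mulrDl; split => //; apply: giD.
- by move=> a _ Sa [q [Qq ->]]; exists (a * q); rewrite mulrA; split => //; apply: giM.
- move=> n _ [q [Qq ->]]; exists (proj (n - m) q); rewrite (proj_mulr _ _ cy); split => //.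
  exact: gip.
Qed.

Lemma mulI_sb Q y L : (forall q, Q q -> S q) -> gi L -> L y -> sb (mulI Q y) L.
Proof. by move=> QS gL Ly _ [q [Qq ->]]; apply: giM => //; apply: QS. Qed.

Definition col (K : A -> Prop) y a := S a /\ K (a * y).
Lemma gi_col K m y : gi K -> comp m y -> gi (col K y).
Proof.
move=> gK cy; split.
- by move=> x [].
- by split => //; rewrite mul0r; exact: gi0 gK.
- by move=> a b [Sa Ka] [Sb Kb]; split; [apply: SD | rewrite mulrDl; apply: giD].
- by move=> a x Sa [Sx Kx]; split; [apply: SM | rewrite -mulrA; apply: giM].
- move=> n a [Sa Ka]; split; first exact: Sp.
  have := gip gK (n + m) Ka; by rewrite (proj_mulr _ _ cy) addrK.
Qed.

Definition dcc := forall I : nat -> (A -> Prop), (forall k, gi (I k)) ->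
    (forall k, sb (I k.+1) (I k)) ->
    exists N, forall k, (N <= k)%N -> sb (I k) (I N) /\ sb (I N) (I k).
Hypothesis Hdcc : dcc.

Lemma dcc_min (F : (A -> Prop) -> Prop) : (forall I, F I -> gi I) -> (exists I, F I) ->
  exists I, F I /\ forall I', F I' -> sb I' I -> sb I I'.
Proof.
move=> Fgi [I0 FI0]; apply: NNPP => nomin.
have step : forall I, F I -> exists I', F I' /\ sb I' I /\ ~ sb I I'.
  move=> I FI; apply: NNPP => h; apply: nomin; exists I; split => // I' FI' sI'.
  apply: NNPP => h2; apply: h; exists I'; split => //.
have inh : inhabited (A -> Prop) by constructor; exact: I0.
pose nxt I := epsilon inh (fun I' => F I' /\ sb I' I /\ ~ sb I I').
pose fix sq k := if k is k'.+1 then nxt (sq k') else I0.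
have Fsq : forall k, F (sq k).
  elim => //= k IH; rewrite /nxt; have := epsilon_spec inh _ (step _ IH); by case.
have Psq : forall k, sb (sq k.+1) (sq k) /\ ~ sb (sq k) (sq k.+1).
  move=> k /=; rewrite /nxt; have := epsilon_spec inh _ (step _ (Fsq k)); by case.
have [N HN] := Hdcc (fun k => Fgi _ (Fsq k)) (fun k => (Psq k).1).
have [_ h] := HN N.+1 (leqnSn N).
by have [_ h2] := Psq N; apply: h2.
Qed.


Definition simple K L := [/\ gi K, gi L, sb K L, ~ sb L K &
  forall Q, gi Q -> sb K Q -> sb Q L -> sb Q K \/ sb L Q].

Definition J a := S a /\ forall K L, simple K L -> forall y, L y -> K (a * y).

Lemma giJ : gi J.
Proof.
split.
- by move=> x [].
- by split => // K L [gK _ _ _ _] y _; rewrite mul0r; exact: gi0 gK.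
- move=> a b [Sa Ha] [Sb Hb]; split; first exact: SD.
  move=> K L sKL y Ly; case: (sKL) => gK _ _ _ _; rewrite mulrDl.
  exact: (giD gK (Ha K L sKL y Ly) (Hb K L sKL y Ly)).
- move=> s a Ss [Sa Ha]; split; first exact: SM.
  move=> K L sKL y Ly; case: (sKL) => gK _ _ _ _; rewrite -mulrA.
  exact: (giM gK Ss (Ha K L sKL y Ly)).
- move=> n a [Sa Ha]; split; first exact: Sp.
  move=> K L sKL; case: (sKL) => gK gL _ _ _.
  apply: (hom_ind (P := fun y => K (proj n a * y))).
  + exact: gip gL.
  + by rewrite mulr0; exact: gi0 gK.
  + by move=> x y Kx Ky; rewrite mulrDr; apply: (giD gK).
  + move=> m y Ly cy; have := gip gK (n + m) (Ha K L sKL y Ly).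
    by rewrite (proj_mulr _ _ cy) addrK.
Qed.

Lemma J_mulr a s : J a -> S s -> J (a * s).
Proof.
move=> [Sa Ha] Ss; split; first exact: SM.
move=> K L sKL y Ly; rewrite -mulrA; apply: (Ha K L sKL).
case: sKL => _ gL _ _ _; exact: (giM gL Ss Ly).
Qed.

Definition maxI M := simple M S.

Lemma J_max M : maxI M -> sb J M.
Proof. by move=> mM a [Sa Ha]; have := Ha M S mM 1 S1; rewrite mulr1. Qed.

Lemma col_max K L y m : simple K L -> L y -> comp m y -> ~ K y -> maxI (col K y).
Proof.
move=> [gK gL sKL nLK hKL] Ly cy nKy.
have Sy : S y := giS gL Ly.
have gc := gi_col gK cy.
split.
- exact: gc.
- exact: giSS.
- by move=> x [].
- by move=> h; apply: nKy; have [_] := h 1 S1; rewrite mul1r.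
move=> Q gQ scQ sQS.
pose Qy := sumI K (mulI Q y).
have gQy : gi Qy by apply: gi_sum => //; apply: (gi_mulI gQ cy).
have [h|h] := hKL Qy gQy (@sum_l K _ (gi_mulI gQ cy Sy)) (sum_le gL sKL (mulI_sb (giS gQ) gL Ly)).
  left => q Qq; split; first exact: (giS gQ).
  by apply: h; apply: (@sum_r K _ gK); exists q.
right => s Ss; rewrite -(mulr1 s); apply: (giM gQ) => //.
have [k [_ [Kk [[q [Qq ->]] ey]]]] := h y Ly.
have : col K y (1 - q).
  split; first by apply: SD => //; apply: SN; apply: (giS gQ).
  by rewrite mulrBl mul1r {1}ey addrK.
move/scQ => Q1q; have := giD gQ Q1q Qq; by rewrite subrK.
Qed.

Definition noeth K L := forall N : nat -> (A -> Prop), (forall i, gi (N i)) ->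
  (forall i, sb K (N i) /\ sb (N i) L) -> (forall i, sb (N i) (N i.+1)) ->
  exists M, forall k, (M <= k)%N -> sb (N k) (N M).

Lemma asc_le (N : nat -> A -> Prop) : (forall i, sb (N i) (N i.+1)) ->
  forall i k, (i <= k)%N -> sb (N i) (N k).
Proof.
move=> h i k /subnK <-; elim: (k - i)%N => [|d IH] //= x Nx.
by apply: h; apply: IH.
Qed.

Lemma noeth_ext K L P : gi K -> gi L -> gi P -> sb K L -> sb L P ->
  noeth K L -> noeth L P -> noeth K P.
Proof.
move=> gK gL gP sKL sLP nKL nLP N gN bN aN.
have b1 : forall i, sb K (capI (N i) L) /\ sb (capI (N i) L) L.
  by move=> i; split => x; [move=> Kx; split; [apply: (bN i).1 | apply: sKL] | case].
have a1 : forall i, sb (capI (N i) L) (capI (N i.+1) L).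
  by move=> i x [h1 h2]; split => //; apply: aN.
have [M1 H1] := nKL _ (fun i => gi_cap (gN i) gL) b1 a1.
have b2 : forall i, sb L (sumI (N i) L) /\ sb (sumI (N i) L) P.
  by move=> i; split; [apply: sum_r; apply: gN | apply: sum_le => //; apply: (bN i).2].
have a2 : forall i, sb (sumI (N i) L) (sumI (N i.+1) L).
  move=> i; apply: sum_le; first exact: gi_sum.
    by move=> x Nx; apply: sum_l => //; apply: aN.
  by apply: sum_r.
have [M2 H2] := nLP _ (fun i => gi_sum (gN i) gL) b2 a2.
exists (maxn M1 M2) => k hk x Nkx.
set M := maxn M1 M2 in hk *.
have le1 : (M1 <= M)%N by rewrite leq_maxl.
have le2 : (M2 <= M)%N by rewrite leq_maxr.
have [a [l [Na [Ll ex]]]] : sumI (N M) L x.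
  apply: (asc_le a2 le2); apply: H2; first exact: leq_trans hk.
  by apply: sum_l.
have NMk : sb (N M) (N k) by apply: asc_le.
have Nkl : N k l.
  have -> : l = x - a by rewrite ex addrC addKr.
  by apply: (giB (gN k)) => //; apply: NMk.
have : capI (N M1) L l by apply: H1; [exact: leq_trans hk | split].
move/(asc_le a1 le1) => [NMl _].
by rewrite ex; apply: (giD (gN M)).
Qed.

Definition inter (Ms : nat -> A -> Prop) (c : nat -> Prop) x := S x /\ forall u, c u -> Ms u x.

Lemma gi_inter Ms c : (forall u, c u -> gi (Ms u)) -> gi (inter Ms c).
Proof.
move=> h; split.
- by move=> x [].
- by split => // u cu; exact: gi0 (h u cu).
- by move=> x y [Sx Hx] [Sy Hy]; split; [apply: SD | move=> u cu; apply: (giD (h u cu)); auto].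
- by move=> a x Sa [Sx Hx]; split; [apply: SM | move=> u cu; apply: (giM (h u cu)); auto].
- by move=> n x [Sx Hx]; split; [apply: Sp | move=> u cu; apply: (gip (h u cu)); auto].
Qed.

Lemma ex_min_nat (P : nat -> Prop) : (exists n, P n) -> exists n, P n /\ forall k, (k < n)%N -> ~ P k.
Proof.
move=> [n Pn].
suff H : forall N m, (m <= N)%N -> P m -> exists n, P n /\ forall k, (k < n)%N -> ~ P k.
  exact: (H n n (leqnn n) Pn).
elim=> [|N IH] m hm Pm.
  exists m; split => // k; move: hm; rewrite leqn0 => /eqP ->; by [].
case: (classic (exists k, (k < m)%N /\ P k)) => [[k [hk Pk]]|h].
  by apply: (IH k) => //; rewrite -ltnS; apply: leq_trans hk hm.
by exists m; split => // k hk Pk; apply: h; exists k.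
Qed.

Definition capF Ms lo hi := inter Ms (fun u => (lo <= u)%N /\ (u < hi)%N).
Definition Ei Ms m t := inter Ms (fun u => (u < m)%N /\ u <> t).

Lemma Jfin : exists Ms m, [/\ forall u, (u < m)%N -> maxI (Ms u),
   sb (capF Ms 0 m) J & forall t, (t < m)%N -> ~ sb (Ei Ms m t) (Ms t)].
Proof.
pose F X := exists Ms m, (forall u, (u < m)%N -> maxI (Ms u)) /\ X = capF Ms 0 m.
have Fgi : forall X, F X -> gi X.
  move=> X [Ms [m [mx ->]]]; apply: gi_inter => u [_ hu].
  by case: (mx u hu).
have F0 : F (capF (fun _ => S) 0 0).
  by exists (fun _ => S), 0%N; split => // u; rewrite ltn0.
have [X0 [[Ms [m [mx eX]]] minX]] := dcc_min Fgi (ex_intro _ _ F0).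
have X0J : sb X0 J.
  move=> a Xa; rewrite eX in Xa; split; first by case: Xa.
  move=> K L sKL; case: (sKL) => gK gL _ _ _.
  apply: (hom_ind (P := fun y => K (a * y))).
  - exact: gip gL.
  - by rewrite mulr0; exact: gi0 gK.
  - by move=> x y Kx Ky; rewrite mulrDr; apply: (giD gK).
  move=> n y Ly cy; case: (classic (K y)) => Ky.
    by apply: (giM gK) => //; case: Xa.
  have mc := col_max sKL Ly cy Ky.
  pose Ms' u := if (u < m)%N then Ms u else col K y.
  have FX' : F (capF Ms' 0 m.+1).
    exists Ms', m.+1; split => // u hu; rewrite /Ms'; case: ifP => // hum.
    exact: mx.
  have sX' : sb (capF Ms' 0 m.+1) X0.
    move=> x [Sx Hx]; rewrite eX; split => // u [_ hu].
    have := Hx u (conj isT (leq_trans hu (leqnSn _))); by rewrite /Ms' hu.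
  have := minX _ FX' sX' a; rewrite eX => /(_ Xa) [_ /(_ m (conj isT (leqnn _)))].
  by rewrite /Ms' ltnn => -[].
pose PL n := exists Ms, (forall u, (u < n)%N -> maxI (Ms u)) /\ sb (capF Ms 0 n) J.
have [n [[Ms1 [mx1 sJ1]] minN]] := @ex_min_nat PL (ex_intro _ m (ex_intro _ Ms (conj mx (fun x h => X0J x (eq_ind _ (fun Y => Y x) h _ (esym eX)))))).
exists Ms1, n; split => // t ht sE.
apply: (minN n.-1); first by lia.
exists (fun u => if (u < t)%N then Ms1 u else Ms1 u.+1); split.
  by move=> u hu; case: ifP => _; apply: mx1; lia.
move=> x [Sx Hx]; apply: sJ1; split => // u [_ hu].
have Ex : Ei Ms1 n t x.
  split => // w [hw nwt].
  case: (ltnP w t) => hwt.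
    have hw' : (w < n.-1)%N by lia.
    by have := Hx w (conj isT hw'); rewrite hwt.
  have hw' : (w.-1 < n.-1)%N by lia.
  have := Hx w.-1 (conj isT hw').
  have -> : (w.-1 < t)%N = false by lia.
  by have -> : w.-1.+1 = w by lia.
case: (eqVneq u t) => [->|nut]; first exact: sE.
by case: Ex => _ /(_ u (conj hu (elimN eqP nut))).
Qed.

Lemma star0 T : gi T -> sb J T -> ~ T 1 -> exists N, simple J N /\ ~ sb N T.
Proof.
move=> gT sJT nT1.
have [Ms [m [mx sJ irr]]] := Jfin.
have gM u : (u < m)%N -> gi (Ms u) by move=> hu; case: (mx u hu).
have JM u : (u < m)%N -> sb J (Ms u) by move=> hu; apply: J_max; apply: mx.
have gE t : gi (Ei Ms m t) by apply: gi_inter => u [hu _]; apply: gM.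
have capJ t x : (t < m)%N -> Ei Ms m t x -> Ms t x -> J x.
  move=> ht [Sx Hx] Mx; apply: sJ; split => // u [_ hu].
  by case: (eqVneq u t) => [->|nut] //; apply: Hx; split => //; apply/eqP.
have sumS t : (t < m)%N -> sb S (sumI (Ms t) (Ei Ms m t)).
  move=> ht; case: (mx t ht) => gMt _ _ _ hM.
  have [h|h] := hM _ (gi_sum gMt (gE t)) (@sum_l (Ms t) _ (gE t)) (sum_le giSS (giS gMt) (giS (gE t))).
    by exfalso; apply: (irr t ht) => x Ex; apply: h; apply: sum_r.
  exact: h.
case: (classic (exists t, (t < m)%N /\ ~ sb (Ei Ms m t) T)) => [[t [ht nET]]|h].
  exists (Ei Ms m t); split => //; split => //.
  - exact: giJ.
  - move=> x Jx; split; first by case: Jx.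
    by move=> u [hu _]; apply: JM.
  - by move=> h; apply: (irr t ht) => x /h; apply: J_max; apply: mx.
  move=> Q gQ sJQ sQE; case: (mx t ht) => gMt _ _ _ hM.
  have [h|h] := hM _ (gi_sum gQ gMt) (@sum_r Q (Ms t) gQ) (sum_le giSS (giS gQ) (giS gMt)).
    left => x Qx; apply: (capJ t x ht (sQE x Qx)); apply: h; exact: sum_l.
  right => e Ee; have [q [a [Qq [Ma ea]]]] := h e (giS (gE t) Ee).
  have Ja : J a.
    apply: (capJ t a ht) => //.
    have -> : a = e - q by rewrite ea addrC addKr.
    by apply: (giB (gE t)) => //; apply: sQE.
  by rewrite ea; apply: (giD gQ) => //; apply: sJQ.
exfalso; apply: nT1.
have hE t : (t < m)%N -> sb (Ei Ms m t) T.
  by move=> ht; apply: NNPP => nE; apply: h; exists t.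
suff : forall k, (k <= m)%N -> sb (capF Ms k m) T.
  by move/(_ m (leqnn m)); apply; split => // u [h1 h2]; lia.
elim=> [|k IH] hk.
  by move=> x Cx; apply: sJT; apply: sJ.
move=> x [Sx Hx].
have hkm : (k < m)%N by [].
have [a [e [Ma [Ee ex]]]] := sumS k hkm x Sx.
rewrite ex; apply: (giD gT); last exact: (hE k hkm e Ee).
apply: IH; first exact: ltnW.
have Sa : S a by apply: (giS (gM k hkm)).
split => // u [hku hum].
case: (eqVneq u k) => [->|nuk] //.
have hu' : (k < u)%N by rewrite ltn_neqAle eq_sym nuk.
have -> : a = x - e by rewrite ex addrK.
apply: (giB (gM u hum)); first by apply: Hx.
by case: Ee => _; apply; split => //; apply/eqP.
Qed.

Lemma star K L T : gi K -> gi L -> gi T -> sb K T -> sb T L -> ~ sb L T ->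
  (forall j y, J j -> L y -> K (j * y)) ->
  exists N, [/\ gi N, simple K N, sb N L & ~ sb N T].
Proof.
move=> gK gL gT sKT sTL nLT hJ.
have [m [y [Ly [cy nTy]]]] : exists m y, L y /\ comp m y /\ ~ T y.
  apply: NNPP => h; apply: nLT; apply: (hom_ind (P := T)).
  - exact: gip gL.
  - exact: gi0 gT.
  - exact: giD gT.
  move=> m y Ly cy; apply: NNPP => nTy; apply: h; by exists m, y.
have Sy : S y := giS gL Ly.
have gT' := gi_col gT cy.
have sJT' : sb J (col T y).
  by move=> j Jj; split; [case: Jj | apply: sKT; apply: hJ].
have nT'1 : ~ col T y 1 by case => _; rewrite mul1r.
have [N0 [sN0 nN0]] := star0 gT' sJT' nT'1.
case: (sN0) => gJ gN0 sJN0 nN0J hN0.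
have gNy := gi_mulI gN0 cy Sy.
pose N := sumI K (mulI N0 y).
have gN : gi N := gi_sum gK gNy.
have [d [N0d nTd]] : exists d, N0 d /\ ~ col T y d.
  by apply: NNPP => h; apply: nN0 => d N0d; apply: NNPP => h2; apply: h; exists d.
have Sd : S d := giS gN0 N0d.
have nTdy : ~ T (d * y) by move=> h; apply: nTd; split.
have Ndy : N (d * y) by apply: sum_r => //; exists d.
have sNL : sb N L by apply: sum_le => //; [move=> x Kx; apply: sTL; apply: sKT | apply: mulI_sb => //; apply: giS].
exists N; split => //; last by move=> h; apply: nTdy; apply: h.
split => //.
- exact: sum_l.
- by move=> h; apply: nTdy; apply: sKT; apply: h.
move=> Q gQ sKQ sQN.
have gQ' := gi_cap (gi_col gQ cy) gN0.
have [h|h] := hN0 _ gQ' (fun j Jj => conj (conj (giS gJ Jj) (sKQ _ (hJ _ _ Jj Ly))) (sJN0 _ Jj)) (fun x h => h.2).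
  left => z Qz; have [k [_ [Kk [[e [N0e ->]] ez]]]] := sQN z Qz.
  have Jy : J e.
    apply: h; split => //; split; first exact: (giS gN0).
    have -> : e * y = z - k by rewrite ez addrC addKr.
    by apply: (giB gQ) => //; apply: sKQ.
  by rewrite ez; apply: (giD gK) => //; apply: hJ.
right => z [k [_ [Kk [[e [N0e ->]] ->]]]].
apply: (giD gQ); first exact: sKQ.
by have [[_ ?] _] := h e N0e.
Qed.

Lemma compl K L Q : gi K -> gi L -> gi Q -> sb K Q -> sb Q L ->
  (forall j y, J j -> L y -> K (j * y)) ->
  exists C, [/\ gi C, sb K C, sb C L, sb (capI Q C) K & sb L (sumI Q C)].
Proof.
move=> gK gL gQ sKQ sQL hJ.
pose P (C : A -> Prop) := [/\ gi C, sb K C, sb C L & sb (capI Q C) K].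
pose TT := {C : A -> Prop | P C}.
have PK : P K by split; [exact: gK | by [] | by move=> x Kx; apply: sQL; apply: sKQ | by move=> x []].
pose t0 : TT := exist _ K PK.
pose Rl (a b : TT) : bool := `[< sb (proj1_sig a) (proj1_sig b) >].
have [[C PC] pm] : exists t, premaximal Rl t.
  apply: (ZL_preorder t0).
  - by move=> t; apply/asboolP.
  - by move=> r s t /asboolP h1 /asboolP h2; apply/asboolP => x /h1 /h2.
  move=> A0 tot.
  pose U x := K x \/ exists c, A0 c /\ proj1_sig c x.
  have PU : P U.
    have UL : forall x, U x -> L x.
      move=> x [Kx|[c [_ cx]]]; first by apply: sQL; apply: sKQ.
      by case: c cx => c [gc _ cL _] /= cx; apply: cL.
    split.
    - split.
      + by move=> x /UL; apply: (giS gL).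
      + by left; apply: (gi0 gK).
      + move=> x y [Kx|[c [Ac cx]]] [Ky|[c' [Ac' cy]]].
        * by left; apply: (giD gK).
        * right; exists c'; split => //; case: c' Ac' cy => c' [gc' sKc' _ _] /= _ cy.
          by apply: (giD gc') => //; apply: sKc'.
        * right; exists c; split => //; case: c Ac cx => c [gc sKc _ _] /= _ cx.
          by apply: (giD gc) => //; apply: sKc.
        * have [h|h] := tot _ _ Ac Ac'; move/asboolP: h => h.
            right; exists c'; split => //; case: c' Ac' cy h => c' [gc' _ _ _] /= _ cy h.
            by apply: (giD gc') => //; apply: h.
          right; exists c; split => //; case: c Ac cx h => c [gc _ _ _] /= _ cx h.
          by apply: (giD gc) => //; apply: h.
      + move=> a x Sa [Kx|[c [Ac cx]]]; first by left; apply: (giM gK).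
        right; exists c; split => //; case: c Ac cx => c [gc _ _ _] /= _ cx.
        by apply: (giM gc).
      + move=> n x [Kx|[c [Ac cx]]]; first by left; apply: (gip gK).
        right; exists c; split => //; case: c Ac cx => c [gc _ _ _] /= _ cx.
        by apply: (gip gc).
    - by move=> x Kx; left.
    - exact: UL.
    - move=> x [Qx [Kx|[c [_ cx]]]] //.
      by case: c cx => c [gc _ _ cK] /= cx; apply: cK; split.
  exists (exist _ U PU) => s As; apply/asboolP => x /= sx; right; by exists s.
have [gC sKC sCL sQC] := PC.
exists C; split => //.
apply: NNPP => nL.
have gQC := gi_sum gQ gC.
have [N [gN sKN sNL nNT]] := star gK gL gQC (fun x Kx => @sum_l Q C gC x (sKQ x Kx))
   (sum_le gL sQL sCL) nL hJ.
case: (sKN) => _ _ sKN' _ hN.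
pose C' := sumI C N.
have PC' : P C'.
  split.
  - exact: gi_sum.
  - by move=> x Kx; apply: sum_l => //; apply: sKC.
  - exact: sum_le.
  move=> x [Qx [c [n [Cc [Nn ex]]]]].
  have gI := gi_cap gN gQC.
  have [h|h] := hN _ gI (fun x Kx => conj (sKN' x Kx) (@sum_l Q C gC x (sKQ x Kx))) (fun x h => h.1).
    have Kn : K n.
      apply: h; split => //; exists x, (- c); split => //; split.
        by apply: (giN gC).
      by rewrite ex addrC addKr.
    apply: sQC; split => //.
    by rewrite ex; apply: (giD gC) => //; apply: sKC.
  by exfalso; apply: nNT => y /h [].
have := pm (exist _ C' PC').
have -> : Rl (exist _ C PC) (exist _ C' PC').
  by apply/asboolP => x Cx /=; apply: sum_l.
move=> /(_ isT) /asboolP /= sC'C.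
apply: nNT => y Ny; apply: sum_r => //; apply: sC'C; apply: sum_r => //.
Qed.

Lemma layer K L : gi K -> gi L -> sb K L -> (forall j y, J j -> L y -> K (j * y)) -> noeth K L.
Proof.
move=> gK gL sKL hJ N gN bN aN.
have inh : inhabited (A -> Prop) by constructor; exact: K.
pose good Q L' C := [/\ gi C, sb K C, sb C L', sb (capI Q C) K & sb L' (sumI Q C)].
pose cmpl Q L' := epsilon inh (good Q L').
pose fix Cs i := if i is i'.+1 then cmpl (capI (N i) (Cs i')) (Cs i') else cmpl (N 0) L.
have step0 : good (N 0) L (Cs 0).
  apply: epsilon_spec; apply: compl => //; [exact: (bN 0).1 | exact: (bN 0).2].
have step : forall i, good (N i) L (Cs i) -> good (N i.+1) L (Cs i.+1) /\ sb (Cs i.+1) (Cs i).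
  move=> i [gC sKC sCL sQC sLC].
  have gQ : gi (capI (N i.+1) (Cs i)) := gi_cap (gN _) gC.
  have : good (capI (N i.+1) (Cs i)) (Cs i) (Cs i.+1).
    apply: epsilon_spec; apply: compl => //.
    - by move=> x Kx; split; [apply: (bN _).1 | apply: sKC].
    - by move=> x [].
    - by move=> j y Jj Cy; apply: hJ => //; apply: sCL.
  move=> [gC' sKC' sC'C sQC' sCC'].
  split => //; split => //.
  - by move=> x /sC'C /sCL.
  - by move=> x [Nx C'x]; apply: sQC'; split => //; split => //; apply: sC'C.
  move=> x Lx; have [a [c [Na [Cc ex]]]] := sLC x Lx.
  have [q [c' [[Nq _] [C'c' ec]]]] := sCC' c Cc.
  exists (a + q), c'; split; first by apply: (giD (gN _)) => //; apply: aN.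
  by split => //; rewrite ex ec addrA.
have inv : forall i, good (N i) L (Cs i) by elim => [|i IH] //; exact: (step i IH).1.
have gCs : forall i, gi (Cs i) by move=> i; case: (inv i).
have [M HM] := Hdcc gCs (fun i => (step i (inv i)).2).
have dN : forall k, (M <= k)%N -> sb (N k.+1) (N k).
  move=> k hk x Nx.
  have [_ _ _ _ sLC] := inv k.
  have [a [c [Na [Cc ex]]]] := sLC x ((bN _).2 x Nx).
  have Nc : N k.+1 c.
    have -> : c = x - a by rewrite ex addrC addKr.
    by apply: (giB (gN _)) => //; apply: aN.
  have Cc' : Cs k.+1 c.
    by apply: (HM k.+1 (leq_trans hk (leqnSn _))).2; apply: (HM k hk).1.
  have [_ _ _ sQC _] := inv k.+1.
  have Kc := sQC c (conj Nc Cc').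
  by rewrite ex; apply: (giD (gN _)) => //; apply: (bN _).1.
exists M => k hk; move: hk; rewrite leq_eqVlt => /orP [/eqP -> //|].
elim: k => [//|k IH] hk.
move: hk; rewrite ltnS leq_eqVlt => /orP [/eqP <-|hk] x /dN.
  by apply; apply: leqnn.
by move=> h; apply: IH => //; apply: h; apply: ltnW.
Qed.

Inductive lspan (G : A -> Prop) : A -> Prop :=
| ls0 : lspan G 0
| lsG x : G x -> lspan G x
| lsD x y : lspan G x -> lspan G y -> lspan G (x + y)
| lsM n s x : comp n s -> S s -> lspan G x -> lspan G (s * x).

Lemma gi_lspan G : (forall x, G x -> S x) -> (forall x, G x -> exists n, comp n x) -> gi (lspan G).
Proof.
move=> GS Gh; split.
- move=> x; elim.
  + exact: S0.
  + exact: GS.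
  + by move=> u v _ Su _ Sv; apply: SD.
  + by move=> n s u _ Ss _ Su; apply: SM.
- exact: ls0.
- exact: lsD.
- move=> a x Sa Lx; apply: (hom_ind (P := fun a => lspan G (a * x))) Sa.
  + exact: Sp.
  + by rewrite mul0r; exact: ls0.
  + by move=> u v Lu Lv; rewrite mulrDl; apply: lsD.
  + by move=> n u Su cu; apply: (lsM cu).
- move=> n x Lx; elim: Lx n.
  + by move=> n; rewrite proj0; exact: ls0.
  + move=> y Gy n; have [m cy] := Gh y Gy; rewrite (proj_comp n cy).
    by case: eqP => _; [apply: lsG | apply: ls0].
  + by move=> y z _ Ly _ Lz n; rewrite proj_add; apply: lsD.
  + by move=> p s y cs Ss _ Ly n; rewrite (proj_mull _ _ cs); apply: (lsM cs).
Qed.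

Lemma lspan_mono (G G' : A -> Prop) : sb G G' -> sb (lspan G) (lspan G').
Proof.
move=> h x; elim.
- exact: ls0.
- by move=> y Gy; apply: lsG; apply: h.
- by move=> *; apply: lsD.
- by move=> n s y cs Ss _ Hy; apply: (lsM cs).
Qed.

Definition Gen (P : A -> Prop) x :=
  exists q j n m, [/\ P q, comp n q, J j, comp m j & x = q * j].

Fixpoint Pw k := if k is k'.+1 then lspan (Gen (Pw k')) else S.

Lemma gi_Pw k : gi (Pw k).
Proof.
elim: k => [|k IH] /=; first exact: giSS.
apply: gi_lspan.
  by move=> _ [q [j [n [m [Pq _ Jj _ ->]]]]]; apply: SM; [apply: (giS IH) | case: Jj].
by move=> _ [q [j [n [m [_ cq _ cj ->]]]]]; exists (n + m); apply: compM.
Qed.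

Lemma Pw_desc k : sb (Pw k.+1) (Pw k).
Proof.
elim: k => [|k IH]; first exact: (giS (gi_Pw 1)).
apply: lspan_mono => _ [q [j [n [m [Pq cq Jj cj ->]]]]].
by exists q, j, n, m; split => //; apply: IH.
Qed.

Lemma J_Pw1 z : J z -> Pw 1 z.
Proof.
apply: (hom_ind (P := Pw 1)).
- exact: gip giJ.
- exact: ls0.
- exact: lsD.
move=> n x Jx cx; apply: lsG; exists 1, x, 0, n; split => //; first exact: comp1.
by rewrite mul1r.
Qed.

Lemma JP k j y : J j -> Pw k y -> Pw k.+1 (j * y).
Proof.
elim: k j y => [|k IH] j y Jj Py.
  by apply: J_Pw1; apply: J_mulr.
move: Jj; apply: (hom_ind (P := fun j => Pw k.+2 (j * y))) => //.
- exact: gip giJ.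
- by rewrite mul0r; exact: gi0 (gi_Pw _).
- by move=> u v Pu Pv; rewrite mulrDl; apply: (giD (gi_Pw _)).
move=> p {}j Jj cj; move: p j Jj cj; elim: Py.
- by move=> p j _ _; rewrite mulr0; exact: ls0.
- move=> _ [q [j' [n [m [Pq cq Jj' cj' ->]]]]] p j Jj cj.
  apply: lsG; exists (j * q), j', (p + n), m; split => //.
  + exact: IH.
  + exact: compM.
  + by rewrite mulrA.
- by move=> u v _ Hu _ Hv p j Jj cj; rewrite mulrDr; apply: lsD; [apply: (Hu p) | apply: (Hv p)].
- move=> n s x cs Ss _ Hx p j Jj cj; rewrite mulrA.
  apply: (Hx _ (j * s)); [exact: J_mulr | exact: (compM cj cs)].
Qed.

Lemma nil : exists n, forall x, Pw n x -> x = 0.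
Proof.
have [n Hn] := Hdcc gi_Pw Pw_desc.
exists n; have stab : sb (Pw n) (Pw n.+1) := (Hn n.+1 (leqnSn n)).2.
have gI := gi_Pw n.
set I := Pw n in stab gI *.
move=> a Ia; apply: NNPP => na.
pose F L := gi L /\ exists b y, I b /\ L y /\ b * y <> 0.
have FS : F S by split; [exact: giSS | exists a, 1; rewrite mulr1].
have [L [[gL [b [y [Ib [Ly nby]]]]] minL]] := dcc_min (F := F) (fun L (h : F L) => proj1 h) (ex_intro _ S FS).
have [m [x [Lx [cx nbx]]]] : exists m x, L x /\ comp m x /\ b * x <> 0.
  apply: NNPP => h; apply: nby.
  apply: (hom_ind (P := fun y => b * y = 0)) Ly.
  - exact: gip gL.
  - by rewrite mulr0.
  - by move=> u v hu hv; rewrite mulrDr hu hv addr0.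
  - move=> k u Lu cu; apply: NNPP => nb; apply: h; exists k, u; auto.
have [c [j [Ic [Jj ncjx]]]] : exists c j, I c /\ J j /\ c * (j * x) <> 0.
  have Pb := stab b Ib; move: Pb nbx => /=; elim.
  - by rewrite mul0r.
  - move=> _ [q [j' [n1 [m1 [Pq _ Jj' _ ->]]]]] h; exists q, j'; split => //.
    by split => //; rewrite mulrA.
  - move=> u v _ Hu _ Hv h; case: (classic (u * x = 0)) => hu.
      apply: Hv => hv; apply: h; by rewrite mulrDl hu hv addr0.
    exact: Hu.
  - move=> p s u _ _ _ Hu h; apply: Hu => hu; apply: h; by rewrite -mulrA hu mulr0.
have Sx : S x := giS gL Lx.
have gL' := gi_mulI giJ cx Sx.
have FL' : F (mulI J x).
  by split => //; exists c, (j * x); split => //; split => //; exists j.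
have sL'L : sb (mulI J x) L by apply: mulI_sb => //; apply: (giS giJ).
have [j' [Jj' exj]] := minL _ FL' sL'L x Lx.
pose j0 := proj 0 j'.
have Jj0 : J j0 := gip giJ 0 Jj'.
have ex0 : x = j0 * x.
  have h : proj m x = x by rewrite (proj_comp _ cx) eqxx.
  by rewrite -{1}h {1}exj (proj_mulr _ _ cx) subrr.
pose K z := L z /\ forall b s, I b -> S s -> b * (s * z) = 0.
have gK : gi K.
  split.
  - by move=> z [Lz _]; apply: (giS gL).
  - by split; [exact: gi0 gL | by move=> *; rewrite !mulr0].
  - move=> u v [Lu Hu] [Lv Hv]; split; first exact: (giD gL).
    by move=> b' s Ib' Ss; rewrite mulrDr mulrDr Hu // Hv // addr0.
  - move=> t z St [Lz Hz]; split; first exact: (giM gL).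
    by move=> b' s Ib' Ss; rewrite [s * _]mulrA Hz //; apply: SM.
  - move=> k z [Lz Hz]; split; first exact: (gip gL).
    move=> b' s Ib'; move: s; apply: (hom_ind (P := fun b' => forall s, S s -> b' * (s * proj k z) = 0)) Ib'.
    + exact: gip gI.
    + by move=> s _; rewrite mul0r.
    + by move=> u v Hu Hv s Ss; rewrite mulrDl Hu // Hv // addr0.
    move=> p u Iu cu s Ss; move: s Ss.
    apply: (hom_ind (P := fun s => u * (s * proj k z) = 0)).
    + exact: Sp.
    + by rewrite mul0r mulr0.
    + by move=> s1 s2 h1 h2; rewrite mulrDl mulrDr h1 h2 addr0.
    move=> q s Ss cs.
    have cus := compM cu cs.
    have := congr1 (proj (p + q + k)) (Hz u s Iu Ss).
    rewrite mulrA (proj_mull _ _ cus) proj0 mulrA.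
    have -> : p + q + k - (p + q) = k by rewrite [p + q + k]addrC addrK.
    by [].

have sK : simple K L.
  split => //.
  - by move=> z [].
  - move=> h; have [_ Hx] := h x Lx; apply: ncjx; apply: Hx => //; by case: Jj.
  move=> Q gQ sKQ sQL; case: (classic (exists b y, I b /\ Q y /\ b * y <> 0)) => [hQ|hQ].
    by right; apply: (minL Q (conj gQ hQ) sQL).
  left => z Qz; split; first exact: sQL.
  move=> b' s Ib' Ss; apply: NNPP => nz; apply: hQ; exists b', (s * z); split => //; split => //.
  exact: (giM gQ).
have := Jj0.2 K L sK x Lx; rewrite -ex0 => -[_ Hx].
by apply: ncjx; apply: Hx => //; case: Jj.
Qed.

Lemma noeth_Pw k : noeth (Pw k) S.
Proof.
elim: k => [|k IH].
  move=> N gN bN aN; exists 0%N => k _ x Nx; apply: (bN 0%N).1; exact: ((bN k).2).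
apply: (noeth_ext (gi_Pw _) (gi_Pw _) giSS (@Pw_desc k) (giS (gi_Pw k))) => //.
apply: layer; [exact: gi_Pw | exact: gi_Pw | exact: Pw_desc | ].
by move=> j y Jj Py; apply: JP.
Qed.

Lemma acc_gi : forall N : nat -> (A -> Prop), (forall i, gi (N i)) ->
  (forall i, sb (N i) (N i.+1)) -> exists M, forall k, (M <= k)%N -> sb (N k) (N M).
Proof.
move=> N gN aN; have [n hn] := nil.
have bN : forall i, sb (Pw n) (N i) /\ sb (N i) S.
  move=> i; split; first by move=> x /hn ->; exact: gi0 (gN i).
  exact: giS (gN i).
exact: (@noeth_Pw n N gN bN aN).
Qed.

End Grading.

Section DG.
Variables (R : comPzRingType) (A : algType R) (comp : int -> A -> Prop) (d : A -> A).
Hypothesis Hsub : grading_submod comp.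
Hypothesis Hdir : grading_direct comp.
Hypothesis Hmul : grading_mul comp.
Hypothesis Hlin : linear d.
Hypothesis Hdeg : forall n x, comp n x -> comp (n + 1) (d x).
Hypothesis Hdd : forall x, d (d x) = 0.
Hypothesis Hleib : forall n a b, comp n a ->
         d (a * b) = d a * b + (-1) ^+ `|n|%N * (a * d b).

Local Notation pr := (proj Hdir).

Lemma dD x y : d (x + y) = d x + d y.
Proof. by have := Hlin 1 x y; rewrite !scale1r. Qed.
Lemma d0 : d 0 = 0.
Proof. by have := dD 0 0; rewrite addr0 => /eqP; rewrite -subr_eq subrr eq_sym => /eqP. Qed.
Lemma dN x : d (- x) = - d x.
Proof. by apply/eqP; rewrite -subr_eq0 opprK -dD addNr d0. Qed.
Lemma dB x y : d (x - y) = d x - d y.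
Proof. by rewrite dD dN. Qed.
Lemma d_sum (s : seq int) (f : int -> A) : d (\sum_(k <- s) f k) = \sum_(k <- s) d (f k).
Proof. by elim: s => [|a s IH]; rewrite ?big_nil ?d0 // !big_cons dD IH. Qed.

Lemma d_proj n x : d (pr n x) = pr (n + 1) (d x).
Proof.
have e : d x = \sum_(k <- map (fun k => k + 1) (supp Hdir x)) d (pr (k - 1) x).
  rewrite big_map {1}(proj_decomp Hdir x) d_sum; apply: eq_bigr => k _.
  by rewrite addrK.
have ui : uniq (map (fun k => k + 1) (supp Hdir x)).
  by rewrite map_inj_uniq ?supp_uniq // => i j /addIr.
rewrite e (proj_sum Hsub) //.
  case: ifP => [_|/negbT nin]; first by rewrite addrK.
  rewrite (@proj_out _ _ _ Hdir n x) ?d0 //.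
  apply: contra nin => h; apply/mapP; by exists n.
by move=> k; have := Hdeg (comp_proj Hsub Hdir (k - 1) x); rewrite subrK.
Qed.

Definition Sk := kerd d.
Lemma Sk0 : Sk 0. Proof. exact: d0. Qed.
Lemma Sk1 : Sk 1.
Proof.
have := @Hleib 0 1 1 (comp1 Hmul); rewrite /= !mulr1 mul1r expr0 mul1r => /eqP.
by rewrite -subr_eq subrr eq_sym => /eqP h; exact: h.
Qed.
Lemma SkD x y : Sk x -> Sk y -> Sk (x + y).
Proof. by rewrite /Sk /kerd dD => -> ->; rewrite addr0. Qed.
Lemma SkN x : Sk x -> Sk (- x).
Proof. by rewrite /Sk /kerd dN => ->; rewrite oppr0. Qed.
Lemma Skp n x : Sk x -> Sk (pr n x).
Proof. by rewrite /Sk /kerd d_proj => ->; rewrite (proj0 Hsub). Qed.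
Lemma SkM x y : Sk x -> Sk y -> Sk (x * y).
Proof.
move=> Sx Sy; apply: (hom_ind Hsub (Hdir := Hdir) (P := fun x => Sk (x * y))) Sx.
- exact: Skp.
- by rewrite mul0r; exact: Sk0.
- by move=> u v hu hv; rewrite mulrDl; apply: SkD.
move=> n u Su cu; rewrite /Sk /kerd (Hleib _ cu).
by rewrite Su Sy mul0r mulr0 mulr0 addr0.
Qed.

Local Notation giK := (gi Hdir Sk).

Lemma gi_to I : giK I -> graded_ideal_of_kerd comp d I.
Proof.
case=> h1 h2 h3 h4 h5; split; first by split.
exact: (proj_graded Hsub (Hdir := Hdir) h5).
Qed.

Lemma dcc_Sk : kerd_graded_artinian comp d -> dcc Hdir Sk.
Proof.
move=> Hart I gI dI; have [N HN] := Hart I (fun k => gi_to (gI k)) dI.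
by exists N => k hk; split => x h; apply/(HN k hk x).
Qed.

Definition Cyc (I : A -> Prop) x := I x /\ d x = 0.
Definition Bd (I : A -> Prop) z := exists y, I y /\ z = d y.

Lemma dg_props I : dg_ideal comp d I ->
  [/\ I 0, (forall x y, I x -> I y -> I (x + y)), (forall a x, I x -> I (a * x)),
      (forall n x, I x -> I (pr n x)) & (forall x, I x -> I (d x))].
Proof.
case=> [[_ I0 ID IM] gs Id]; split => //.
- by move=> a x; apply: IM.
- exact: (graded_proj Hsub Hdir I0 gs).
Qed.

Lemma gi_Cyc I : dg_ideal comp d I -> giK (Cyc I).
Proof.
case/dg_props => I0 ID IM Ip Id; split.
- by move=> x [].
- by split => //; exact: d0.
- by move=> x y [Ix dx] [Iy dy]; split; [apply: ID | rewrite dD dx dy addr0].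
- by move=> a x Sa [Ix dx]; split; [apply: IM | apply: SkM].
- by move=> n x [Ix dx]; split; [apply: Ip | apply: Skp].
Qed.

Lemma gi_Bd I : dg_ideal comp d I -> giK (Bd I).
Proof.
case/dg_props => I0 ID IM Ip Id; split.
- by move=> _ [y [Iy ->]]; apply: Hdd.
- by exists 0; split => //; rewrite d0.
- by move=> _ _ [y [Iy ->]] [y' [Iy' ->]]; exists (y + y'); split; [apply: ID | rewrite dD].
- move=> a _ Sa [y [Iy ->]].
  apply: (hom_ind Hsub (Hdir := Hdir) (P := fun a => Bd I (a * d y))) Sa.
  + exact: Skp.
  + by exists 0; split => //; rewrite d0 mul0r.
  + move=> u v [yu [Iu eu]] [yv [Iv ev]]; exists (yu + yv); split; first exact: ID.
    by rewrite mulrDl eu ev dD.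
  + move=> n u Su cu; have := Hleib y cu; rewrite Su mul0r add0r -signr_odd.
    case: (odd _) => /= hl.
      exists (- (u * y)); split; first by rewrite -mulNr; apply: IM.
      by rewrite dN hl expr1 mulN1r opprK.
    by exists (u * y); split; [apply: IM | rewrite hl expr0 mul1r].
- move=> n _ [y [Iy ->]]; exists (pr (n - 1) y); split; first exact: Ip.
  by rewrite d_proj subrK.
Qed.

Lemma mainDG : kerd_graded_artinian comp d -> dg_noetherian comp d /\ dg_artinian comp d.
Proof.
move=> Hart; have Hdcc := dcc_Sk Hart.
split.
- move=> I dI aI.
  have aC : forall k, sb (Cyc (I k)) (Cyc (I k.+1)) by move=> k x [Ix dx]; split => //; apply: aI.
  have aB : forall k, sb (Bd (I k)) (Bd (I k.+1)) by move=> k _ [y [Iy ->]]; exists y; split => //; apply: aI.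
  have [M1 H1] := acc_gi Hsub Hmul Sk0 Sk1 SkD SkN SkM Skp Hdcc (fun k => gi_Cyc (dI k)) aC.
  have [M2 H2] := acc_gi Hsub Hmul Sk0 Sk1 SkD SkN SkM Skp Hdcc (fun k => gi_Bd (dI k)) aB.
  exists (maxn M1 M2) => k hk x; split; last by apply: (asc_le aI hk).
  move=> Ikx.
  have le1 : (M1 <= maxn M1 M2)%N by rewrite leq_maxl.
  have le2 : (M2 <= maxn M1 M2)%N by rewrite leq_maxr.
  have [y [Iy exy]] := H2 k (leq_trans le2 hk) (d x) (ex_intro _ x (conj Ikx erefl)).
  have IMy : I (maxn M1 M2) y := asc_le aI le2 Iy.
  have [_ ID IM _ _] := dg_props (dI k).
  have [_ IDM IMM _ _] := dg_props (dI (maxn M1 M2)).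
  have Cxy : Cyc (I k) (x - y).
    split; last by rewrite dB exy subrr.
    apply: ID => //; rewrite -mulN1r; apply: IM; exact: (asc_le aI hk IMy).
  have [h _] := H1 k (leq_trans le1 hk) _ Cxy.
  have := asc_le aI le1 h => h'.
  by have := IDM _ _ h' IMy; rewrite subrK.
- move=> I dI dsc.
  have dle : forall i k, (i <= k)%N -> sb (I k) (I i).
    move=> i k /subnK <-; elim: (k - i)%N => [|m IH] //= x h.
    by apply: IH; apply: dsc.
  have aC : forall k, sb (Cyc (I k.+1)) (Cyc (I k)) by move=> k x [Ix dx]; split => //; apply: dsc.
  have aB : forall k, sb (Bd (I k.+1)) (Bd (I k)) by move=> k _ [y [Iy ->]]; exists y; split => //; apply: dsc.
  have [N1 H1] := Hdcc _ (fun k => gi_Cyc (dI k)) aC.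
  have [N2 H2] := Hdcc _ (fun k => gi_Bd (dI k)) aB.
  set M := maxn N1 N2.
  have le1 : (N1 <= M)%N by rewrite leq_maxl.
  have le2 : (N2 <= M)%N by rewrite leq_maxr.
  exists M => k hk x; split; first by apply: (dle _ _ hk).
  move=> IMx.
  have [y [Iy exy]] : Bd (I k) (d x).
    apply: (H2 k (leq_trans le2 hk)).2; apply: (H2 M le2).1; by exists x.
  have [_ ID IM _ _] := dg_props (dI k).
  have [_ IDM IMM _ _] := dg_props (dI M).
  have Cxy : Cyc (I M) (x - y).
    split; last by rewrite dB exy subrr.
    apply: IDM => //; rewrite -mulN1r; apply: IMM; exact: (dle _ _ hk _ Iy).
  have [h _] := (H1 k (leq_trans le1 hk)).2 _ ((H1 M le1).1 _ Cxy).
  by have := ID _ _ h Iy; rewrite subrK.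
Qed.

End DG.

Theorem proposition2p4 (R : comPzRingType) (A : algType R)
  (comp : int -> A -> Prop) (d : A -> A) :
  is_dg_algebra comp d ->
  kerd_graded_artinian comp d ->
  dg_noetherian comp d /\ dg_artinian comp d.
Proof.
move=> [[Hsub Hdir Hmul] [Hlin Hdeg Hdd Hleib]] Hart.
exact: (mainDG Hsub Hdir Hmul Hlin Hdeg Hdd Hleib Hart).
Qed.
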